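(* Let $\mathcal{P}$ be one of the following three point sets in $\mathbb{R}^3$ (the vertices of a regular tetrahedron, of a regular octahedron, or of a cube, all centred at the origin): (a) $q_1=(1,1,1)$, $q_2=(-1,-1,1)$, $q_3=(-1,1,-1)$, $q_4=(1,-1,-1)$ $(n=4)$; (b) $q_1=(1,0,0)$, $q_2=(-1,0,0)$, $q_3=(0,1,0)$, $q_4=(0,-1,0)$, $q_5=(0,0,1)$, $q_6=(0,0,-1)$ $(n=6)$; (c) the eight points $q_1,\dots,q_8$ of the form $(\pm1,\pm1,\pm1)$ $(n=8)$. For $t\in(0,1)$ consider the configuration of $2n$ points $q_1,\dots,q_n,q_{n+1}=tq_1,\dots,q_{2n}=tq_n$ (two nested homothetic copies of the same polyhedron with ratio of edges $t$). Then in each of the three cases there exists $\delta\in(0,1)$ such that: for every $t\in(0,\delta)$ there exist positive masses $m_1,\dots,m_{2n}$ for which this configuration is a central configuration, and for every $t\in(\delta,1)$ there are no positive masses $m_1,\dots,m_{2n}$ for which this configuration is a central configuration.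
   Context: A configuration $q=(q_1,\dots,q_N)$ of distinct points $q_i\in\mathbb{R}^3$ with masses $m_1,\dots,m_N$ is called a central configuration if there exists a constant $c\in\mathbb{R}$ such that $\sum_{j\neq i} m_j\left(\frac{1}{|q_j-q_i|^3}-c\right)(q_j-q_i)=0$ for all $i=1,\dots,N$. (For nonzero total mass this is equivalent to the existence of $\lambda\in\mathbb{R}$ with $-\lambda(q_i-q_0)=\sum_{j\neq i}m_j\frac{q_j-q_i}{|q_j-q_i|^3}$ for all $i$, where $q_0$ is the center of mass.) *)

(* Defs.v *)
From HB Require Import structures.
From mathcomp Require Import all_boot all_order all_algebra.
From mathcomp Require Import reals.
Set Implicit Arguments. Unset Strict Implicit. Unset Printing Implicit Defensive.
Import Order.TTheory GRing.Theory Num.Theory.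
Local Open Scope ring_scope.

Section Defs.
Variable R : realType.

Definition dist3 (x y : 'rV[R]_3) : R :=
  Num.sqrt (\sum_(k < 3) (x ord0 k - y ord0 k) ^+ 2).

Definition central_config (N : nat) (q : 'I_N -> 'rV[R]_3) (m : 'I_N -> R) : Prop :=
  injective q /\
  exists c : R, forall i : 'I_N,
    \sum_(j < N | j != i) (m j * ((dist3 (q j) (q i)) ^- 3 - c)) *: (q j - q i) = 0.

Definition vec3 (a b c : R) : 'rV[R]_3 := \row_(k < 3) [:: a; b; c]`_k.

Definition tetra (i : 'I_4) : 'rV[R]_3 :=
  nth 0 [:: vec3 1 1 1; vec3 (-1) (-1) 1; vec3 (-1) 1 (-1); vec3 1 (-1) (-1)] i.

Definition octa (i : 'I_6) : 'rV[R]_3 :=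
  nth 0 [:: vec3 1 0 0; vec3 (-1) 0 0; vec3 0 1 0; vec3 0 (-1) 0;
            vec3 0 0 1; vec3 0 0 (-1)] i.

Definition cube (i : 'I_8) : 'rV[R]_3 :=
  nth 0 [:: vec3 1 1 1; vec3 1 1 (-1); vec3 1 (-1) 1; vec3 1 (-1) (-1);
            vec3 (-1) 1 1; vec3 (-1) 1 (-1); vec3 (-1) (-1) 1;
            vec3 (-1) (-1) (-1)] i.

Definition nested (n : nat) (P : 'I_n -> 'rV[R]_3) (t : R) (i : 'I_(n + n)) : 'rV[R]_3 :=
  match split i with
  | inl j => P j
  | inr j => t *: P j
  end.

Definition cc_with_positive_masses (n : nat) (P : 'I_n -> 'rV[R]_3) (t : R) : Prop :=
  exists m : 'I_(n + n) -> R, (forall i, 0 < m i) /\ central_config (nested P t) m.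

Definition threshold_property (n : nat) (P : 'I_n -> 'rV[R]_3) : Prop :=
  exists delta : R, 0 < delta < 1 /\
    (forall t : R, 0 < t < delta -> cc_with_positive_masses P t) /\
    (forall t : R, delta < t < 1 -> ~ cc_with_positive_masses P t).

End Defs.

(* Main.v *)
Require Import Defs.
From mathcomp Require Import all_boot all_order all_algebra.
From mathcomp Require Import reals.
From mathcomp Require Import boolp classical_sets functions topology normedtype derive realfun.
From mathcomp.algebra_tactics Require Import ring lra.
Set Implicit Arguments. Unset Strict Implicit. Unset Printing Implicit Defensive.
Import Order.TTheory GRing.Theory Num.Theory.
Import numFieldNormedType.Exports.
Local Open Scope ring_scope.

Section Dot.
Variable R : realType.
Implicit Types x y z : 'rV[R]_3.

Definition dotv x y : R := \sum_(l < 3) x ord0 l * y ord0 l.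

Ltac dotvE := rewrite /dotv ?big_ord_recr ?big_ord0 /= ?mxE.

Lemma dotvC x y : dotv x y = dotv y x.
Proof. by dotvE; ring. Qed.

Lemma dotvDl x y z : dotv (x + y) z = dotv x z + dotv y z.
Proof. by dotvE; ring. Qed.

Lemma dotvBl x y z : dotv (x - y) z = dotv x z - dotv y z.
Proof. by dotvE; ring. Qed.

Lemma dotvZl a x z : dotv (a *: x) z = a * dotv x z.
Proof. by dotvE; ring. Qed.

Lemma dotvZr a x z : dotv z (a *: x) = a * dotv z x.
Proof. by dotvE; ring. Qed.

Lemma dotv_suml (I : finType) (Pr : pred I) (f : I -> 'rV[R]_3) z :
  dotv (\sum_(j | Pr j) f j) z = \sum_(j | Pr j) dotv (f j) z.
Proof.
rewrite /dotv; under eq_bigr do rewrite summxE mulr_suml.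
exact: exchange_big.
Qed.

Lemma dist3E x y : dist3 x y = Num.sqrt (dotv x x - 2 * dotv x y + dotv y y).
Proof.
rewrite /dist3; congr Num.sqrt; dotvE; ring.
Qed.

End Dot.

Definition d1 {R : realType} (rho2 v : R) := Num.sqrt (rho2 - 2 * v + rho2).
Definition d2 {R : realType} (rho2 t v : R) := Num.sqrt (rho2 - 2 * (t * v) + t ^+ 2 * rho2).
Definition d3 {R : realType} (rho2 t v : R) :=
  Num.sqrt (t ^+ 2 * rho2 - 2 * (t ^+ 2 * v) + t ^+ 2 * rho2).

Section Frame.
Variable R : realType.
Variables (n : nat) (P : 'I_n -> 'rV[R]_3) (rho2 : R) (i0 : 'I_n).
Hypothesis rho2_gt0 : 0 < rho2.
Hypothesis HP0 : forall i, dotv (P i) (P i) = rho2.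
Hypothesis Hlt : forall i k, i != k -> dotv (P k) (P i) < rho2.
Hypothesis HS1 : forall (G : R -> R) i,
  \sum_k G (dotv (P k) (P i)) *: P k =
  (\sum_k G (dotv (P k) (P i)) * dotv (P k) (P i) / rho2) *: P i.
Hypothesis HS2 : forall (G : R -> R) i,
  \sum_k G (dotv (P k) (P i)) = \sum_k G (dotv (P k) (P i0)).
Hypothesis HS3 : \sum_k dotv (P k) (P i0) = 0.

Definition dd k := dotv (P k) (P i0).
Lemma HS2' (G : R -> R) i : \sum_k G (dotv (P k) (P i)) = \sum_k G (dd k).
Proof. exact: HS2. Qed.

Definition Kc := \sum_k (rho2 - dd k) * d1 rho2 (dd k) ^- 3.
Definition Kt t := \sum_k (rho2 - dd k) * d3 rho2 t (dd k) ^- 3.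
Definition W1 t := \sum_k (dd k - t * rho2) * d2 rho2 t (dd k) ^- 3.
Definition W2 t := \sum_k (t * dd k - rho2) * d2 rho2 t (dd k) ^- 3.
Definition alpha t := - (t * Kc) - W1 t.
Definition beta t := t * W2 t + t * Kt t.

Lemma nestedL t j : nested P t (lshift n j) = P j.
Proof. by rewrite /nested (unsplitK (inl _ j)). Qed.
Lemma nestedR t j : nested P t (rshift n j) = t *: P j.
Proof. by rewrite /nested (unsplitK (inr _ j)). Qed.

Lemma dist_ll j i : dist3 (P j) (P i) = d1 rho2 (dotv (P j) (P i)).
Proof. by rewrite dist3E !HP0. Qed.
Lemma dist_rl t j i : dist3 (t *: P j) (P i) = d2 rho2 t (dotv (P j) (P i)).
Proof. rewrite dist3E !dotvZl !dotvZr !HP0 /d2; congr Num.sqrt; ring. Qed.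
Lemma dist_lr t j i : dist3 (P j) (t *: P i) = d2 rho2 t (dotv (P j) (P i)).
Proof. rewrite dist3E !dotvZl !dotvZr !HP0 /d2; congr Num.sqrt; ring. Qed.
Lemma dist_rr t j i : dist3 (t *: P j) (t *: P i) = d3 rho2 t (dotv (P j) (P i)).
Proof. rewrite dist3E !dotvZl !dotvZr !HP0 /d3; congr Num.sqrt; ring. Qed.

Lemma sum_all (N : nat) (F : 'I_N -> 'rV[R]_3) (a : 'I_N -> R) (q : 'I_N -> 'rV[R]_3) i :
  \sum_(j < N | j != i) a j *: (q j - q i) = \sum_j a j *: (q j - q i).
Proof. by rewrite [RHS](bigD1 i) //= subrr scaler0 add0r. Qed.

Definition phiE (q : 'I_(n + n) -> 'rV[R]_3) m c i :=
  \sum_(j < n + n | j != i) (m j * ((dist3 (q j) (q i)) ^- 3 - c)) *: (q j - q i).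

Lemma E_l t m c i : phiE (nested P t) m c (lshift n i) =
  \sum_j (m (lshift n j) * (d1 rho2 (dotv (P j) (P i)) ^- 3 - c)) *: (P j - P i) +
  \sum_j (m (rshift n j) * (d2 rho2 t (dotv (P j) (P i)) ^- 3 - c)) *: (t *: P j - P i).
Proof.
rewrite /phiE (sum_all (fun _ => 0)) big_split_ord /=.
congr (_ + _); apply: eq_bigr => j _; rewrite !nestedL ?nestedR.
  by rewrite dist_ll.
by rewrite dist_rl.
Qed.

Lemma E_r t m c i : phiE (nested P t) m c (rshift n i) =
  \sum_j (m (lshift n j) * (d2 rho2 t (dotv (P j) (P i)) ^- 3 - c)) *: (P j - t *: P i) +
  \sum_j (m (rshift n j) * (d3 rho2 t (dotv (P j) (P i)) ^- 3 - c)) *: (t *: P j - t *: P i).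
Proof.
rewrite /phiE (sum_all (fun _ => 0)) big_split_ord /=.
congr (_ + _); apply: eq_bigr => j _; rewrite !nestedR ?nestedL.
  by rewrite dist_lr.
by rewrite dist_rr.
Qed.


Lemma dotv0l z : dotv (0 : 'rV[R]_3) z = 0.
Proof. by rewrite /dotv big1 // => l _; rewrite mxE mul0r. Qed.

Lemma sum_lin (f g : 'I_n -> R) (a b e h : R) :
  \sum_k (a * f k + b * g k + e * dd k + h) =
  a * (\sum_k f k) + b * (\sum_k g k) + e * (\sum_k dd k) + h * n%:R.
Proof.
rewrite !big_split /= -!mulr_sumr sumr_const card_ord; congr (_ + _).
by rewrite mulr_natr.
Qed.

Definition GA c t v := t * ((d1 rho2 v ^- 3 - c) * (v - rho2)) -
   (d2 rho2 t v ^- 3 - c) * (v - t * rho2).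
Definition GB c t v := t * ((d2 rho2 t v ^- 3 - c) * (t * v - rho2)) -
   (d3 rho2 t v ^- 3 - c) * (t * v - t * rho2).

Lemma sumGA c t : \sum_k GA c t (dd k) = alpha t.
Proof.
rewrite /alpha /Kc /W1.
transitivity (\sum_k ((- t) * ((rho2 - dd k) * d1 rho2 (dd k) ^- 3) +
   (-1) * ((dd k - t * rho2) * d2 rho2 t (dd k) ^- 3) + (c * (1 - t)) * dd k + 0)).
  by apply: eq_bigr => k _; rewrite /GA; ring.
by rewrite sum_lin HS3; ring.
Qed.

Lemma sumGB c t : \sum_k GB c t (dd k) = beta t.
Proof.
rewrite /beta /Kt /W2.
transitivity (\sum_k (t * ((t * dd k - rho2) * d2 rho2 t (dd k) ^- 3) +
   t * ((rho2 - dd k) * d3 rho2 t (dd k) ^- 3) + (c * t * (1 - t)) * dd k + 0)).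
  by apply: eq_bigr => k _; rewrite /GB; ring.
by rewrite sum_lin HS3; ring.
Qed.

Lemma sum4 (f g h k : 'I_n -> R) a :
  a * (\sum_j f j + \sum_j g j) - (\sum_j h j + \sum_j k j) =
  \sum_j (a * f j + a * g j - h j - k j).
Proof.
rewrite mulrDr !mulr_sumr opprD -!sumrN -!big_split /=.
by apply: eq_bigr => j _; ring.
Qed.

Lemma nonexist t : 0 < t < 1 -> alpha t < 0 -> beta t < 0 ->
  ~ cc_with_positive_masses P t.
Proof.
move=> /andP[t0 t1] ha hb [m [mpos [_ [c Hc]]]].
have HE : forall i, phiE (nested P t) m c i = 0 by move=> i; exact: Hc.
pose Z := \sum_i (t * dotv (phiE (nested P t) m c (lshift n i)) (P i) -
                  dotv (phiE (nested P t) m c (rshift n i)) (P i)).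
have Z0 : Z = 0.
  by rewrite /Z big1 // => i _; rewrite !HE dotv0l; ring.
have ZE : Z = \sum_j (m (lshift n j) * alpha t + m (rshift n j) * beta t).
  rewrite /Z.
  under eq_bigr => i _ do rewrite E_l E_r !dotvDl !dotv_suml sum4.
  rewrite exchange_big /=; apply: eq_bigr => j _.
  rewrite -(sumGA c t) -(sumGB c t) -(HS2' (GA c t) j) -(HS2' (GB c t) j).
  rewrite !mulr_sumr -big_split /=.
  apply: eq_bigr => i _.
  rewrite !dotvZl !dotvBl !dotvZl !HP0 (dotvC (P i) (P j)) /GA /GB; ring.
have : Z < 0.
  have Fneg : forall j, m (lshift n j) * alpha t + m (rshift n j) * beta t < 0.
    move=> j.
    by rewrite -oppr_gt0 opprD -!mulrN addr_gt0 // mulr_gt0 // ?mpos // oppr_gt0.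
  rewrite ZE (bigD1 i0) //=.
  rewrite -[X in _ < X](addr0 0); apply: ltr_leD; first exact: Fneg.
  rewrite -oppr_ge0 -sumrN; apply: sumr_ge0 => j _; rewrite oppr_ge0 ltW //.
by rewrite Z0 ltxx.
Qed.


Lemma vec_comb (a b : 'I_n -> R) (x : 'I_n -> 'rV[R]_3) (y : 'rV[R]_3) (t : R) :
  \sum_j a j *: (x j - y) + \sum_j b j *: (t *: x j - y) =
  \sum_j (a j + t * b j) *: x j - (\sum_j (a j + b j)) *: y.
Proof.
rewrite -big_split /= scaler_suml -sumrB; apply: eq_bigr => j _.
by apply/rowP => l; rewrite !mxE; ring.
Qed.

Definition mm (mu : R) (j : 'I_(n + n)) := if fintype.split j is inl _ then 1 else mu.
Lemma mmL mu j : mm mu (lshift n j) = 1.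
Proof. by rewrite /mm (unsplitK (inl _ j)). Qed.
Lemma mmR mu j : mm mu (rshift n j) = mu.
Proof. by rewrite /mm (unsplitK (inr _ j)). Qed.

Lemma Pinj : injective P.
Proof.
move=> k l H; case: (eqVneq k l) => [//|kl].
by have := Hlt kl; rewrite H HP0 ltxx.
Qed.

Lemma nested_inj t : 0 < t < 1 -> injective (nested P t).
Proof.
move=> /andP[t0 t1] i j.
case: (split_ordP i) => k ->; case: (split_ordP j) => l ->;
  rewrite ?nestedL ?nestedR => H.
- by rewrite (Pinj H).
- have := HP0 k; rewrite H dotvZl dotvZr HP0 => E; exfalso.
  have : 0 < rho2 * (1 - t) * (1 + t) by rewrite !mulr_gt0 // ?subr_gt0 // addr_gt0.
  nra.
- have := HP0 l; rewrite -H dotvZl dotvZr HP0 => E; exfalso.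
  have : 0 < rho2 * (1 - t) * (1 + t) by rewrite !mulr_gt0 // ?subr_gt0 // addr_gt0.
  nra.
- have tn : t != 0 by rewrite gt_eqF.
  by rewrite (Pinj (scalerI tn H)).
Qed.

Lemma exist_cc t : 0 < t < 1 -> alpha t < 0 -> 0 < beta t ->
  cc_with_positive_masses P t.
Proof.
move=> t01 ha hb; have /andP[t0 t1] := t01.
have n0 : (0 < n)%N := leq_ltn_trans (leq0n _) (ltn_ord i0).
have nR : (n%:R : R) != 0 by rewrite pnatr_eq0 -lt0n.
pose mu := - alpha t / beta t.
have mu0 : 0 < mu by rewrite /mu divr_gt0 // oppr_gt0.
have mu1 : 1 + mu != 0 by rewrite gt_eqF // addr_gt0.
pose c := (Kc - mu * W2 t) / (rho2 * n%:R * (1 + mu)).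
exists (mm mu); split.
  by move=> j; rewrite /mm; case: fintype.split.
split; first exact: nested_inj.
exists c => i; rewrite -/(phiE _ _ _ _).
case: (split_ordP i) => k ->.
- rewrite E_l; under eq_bigr do rewrite mmL; under [X in _ + X]eq_bigr do rewrite mmR.
  rewrite vec_comb.
  rewrite (HS1 (fun v => 1 * (d1 rho2 v ^- 3 - c) + t * (mu * (d2 rho2 t v ^- 3 - c))) k).
  rewrite -scalerBl.
  suff -> : (\sum_k0 (1 * (d1 rho2 (dotv (P k0) (P k)) ^- 3 - c) +
       t * (mu * (d2 rho2 t (dotv (P k0) (P k)) ^- 3 - c))) *
      dotv (P k0) (P k) / rho2 -
   \sum_j (1 * (d1 rho2 (dotv (P j) (P k)) ^- 3 - c) +
      mu * (d2 rho2 t (dotv (P j) (P k)) ^- 3 - c))) = 0 by rewrite scale0r.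
  rewrite -sumrB.
  rewrite (HS2' (fun v => (1 * (d1 rho2 v ^- 3 - c) + t * (mu * (d2 rho2 t v ^- 3 - c))) * v / rho2 -
      (1 * (d1 rho2 v ^- 3 - c) + mu * (d2 rho2 t v ^- 3 - c))) k).
  transitivity (\sum_j ((- rho2^-1) * ((rho2 - dd j) * d1 rho2 (dd j) ^- 3) +
     (mu / rho2) * ((t * dd j - rho2) * d2 rho2 t (dd j) ^- 3) +
     (- (c * (1 + mu * t) / rho2)) * dd j + c * (1 + mu))).
    apply: eq_bigr => j _.
    by move: (d1 rho2 (dd j) ^- 3) (d2 rho2 t (dd j) ^- 3) => A B; field; rewrite gt_eqF.
  have SL := sum_lin (fun j => (rho2 - dd j) * d1 rho2 (dd j) ^- 3)
     (fun j => (t * dd j - rho2) * d2 rho2 t (dd j) ^- 3).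
  cbv beta in SL; rewrite SL HS3 -/Kc -/(W2 t) /c; field.
  by rewrite nR mu1 gt_eqF.
- rewrite E_r; under eq_bigr do rewrite mmL; under [X in _ + X]eq_bigr do rewrite mmR.
  rewrite vec_comb.
  rewrite (HS1 (fun v => 1 * (d2 rho2 t v ^- 3 - c) + t * (mu * (d3 rho2 t v ^- 3 - c))) k).
  rewrite scalerA -scalerBl.
  suff -> : (\sum_k0 (1 * (d2 rho2 t (dotv (P k0) (P k)) ^- 3 - c) +
       t * (mu * (d3 rho2 t (dotv (P k0) (P k)) ^- 3 - c))) *
      dotv (P k0) (P k) / rho2 -
   (\sum_j (1 * (d2 rho2 t (dotv (P j) (P k)) ^- 3 - c) +
      mu * (d3 rho2 t (dotv (P j) (P k)) ^- 3 - c))) * t) = 0 by rewrite scale0r.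
  rewrite mulr_suml -sumrB.
  rewrite (HS2' (fun v => (1 * (d2 rho2 t v ^- 3 - c) + t * (mu * (d3 rho2 t v ^- 3 - c))) * v / rho2 -
      (1 * (d2 rho2 t v ^- 3 - c) + mu * (d3 rho2 t v ^- 3 - c)) * t) k).
  transitivity (\sum_j (rho2^-1 * ((dd j - t * rho2) * d2 rho2 t (dd j) ^- 3) +
     (- (mu * t / rho2)) * ((rho2 - dd j) * d3 rho2 t (dd j) ^- 3) +
     (- (c * (1 + mu * t) / rho2)) * dd j + c * t * (1 + mu))).
    apply: eq_bigr => j _.
    by move: (d2 rho2 t (dd j) ^- 3) (d3 rho2 t (dd j) ^- 3) => A B; field; rewrite gt_eqF.
  have SL := sum_lin (fun j => (dd j - t * rho2) * d2 rho2 t (dd j) ^- 3)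
     (fun j => (rho2 - dd j) * d3 rho2 t (dd j) ^- 3).
  cbv beta in SL; rewrite SL HS3 -/(Kt t) -/(W1 t) /c /mu.
  move: ha hb; rewrite /alpha /beta => ha hb.
  field.
  by apply/and4P; split; rewrite ?nR // gt_eqF //; lra.
Qed.

End Frame.

Section ThrS.
Local Open Scope classical_set_scope.


Lemma threshold_from (R : realType) n (P : 'I_n -> 'rV[R]_3) (A B H : R -> R) :
  (forall t, 0 < t < 1 -> A t < 0 -> 0 < B t -> cc_with_positive_masses P t) ->
  (forall t, 0 < t < 1 -> A t < 0 -> B t < 0 -> ~ cc_with_positive_masses P t) ->
  (forall t, 0 < t < 1 -> A t < 0) ->
  (forall t, 0 < t < 1 -> B t = t * H t) ->
  (forall s t, 0 < s -> s < t -> t < 1 -> H t < H s) ->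
  forall t0 t1, 0 < t0 < 1 -> 0 < H t0 -> 0 < t1 < 1 -> H t1 < 0 ->
  threshold_property P.
Proof.
move=> Hex Hnex HA HB Hdec t0 t1 /andP[t00 t01] Ht0 /andP[t10 t11] Ht1.
pose S := [set t : R | 0 < t < 1 /\ 0 < H t].
have S0 : S !=set0 by exists t0; split => //; apply/andP.
have Sub : ubound S t1.
  move=> s [/andP[s0 s1] Hs]; rewrite leNgt; apply/negP => ts.
  by have := Hdec _ _ t10 ts s1; lra.
have hS : has_sup S by split => //; exists t1.
have d0 : t0 <= sup S by apply: sup_upper_bound => //; split => //; apply/andP.
have d1 : sup S <= t1 by apply: ge_sup.
exists (sup S); split; first by apply/andP; split; lra.
split.
- move=> t /andP[tp td].
  have [y [/andP[y0 y1] Hy] ty] := sup_gt S0 td.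
  have tt01 : 0 < t < 1 by apply/andP; split; lra.
  apply: Hex => //; first exact: HA.
  rewrite HB // mulr_gt0 //; have := Hdec _ _ tp ty y1; lra.
- move=> t /andP[dt t1'].
  have tt01 : 0 < t < 1 by apply/andP; split; lra.
  apply: Hnex => //; first exact: HA.
  rewrite HB // pmulr_rlt0; last lra.
  rewrite ltNge; apply/negP => Ht.
  pose s := (sup S + t) / 2.
  have s0 : 0 < s by rewrite /s; lra.
  have st : s < t by rewrite /s; lra.
  have Ss : S s.
    split; first by apply/andP; split; rewrite /s; lra.
    by have := Hdec _ _ s0 st t1'; lra.
  have := sup_upper_bound hS Ss; rewrite /s; lra.
Qed.


End ThrS.

Section Der.
Variable R : realType.
Variables (a b al be ga : R).
Definition Qf (x : R) := al * x ^+ 2 + be * x + ga.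
Definition fq (x : R) := (a * x + b) * (Num.sqrt (Qf x)) ^- 3.
Definition dfq (x : R) := (a * Qf x - 3 / 2 * (a * x + b) * (2 * al * x + be)) /
   (Qf x ^+ 2 * Num.sqrt (Qf x)).

Lemma Qf_derive (x : R) : is_derive x (1 : R) Qf (2 * al * x + be).
Proof.
rewrite /Qf.
apply: is_derive_eq.
have sc : forall y z : R, y *: z = y * z by [].
rewrite !sc; ring. Qed.


Lemma isdM (f g : R -> R) (x df dg : R) : is_derive x (1:R) f df -> is_derive x (1:R) g dg ->
  is_derive x (1:R) (fun y => f y * g y) (f x * dg + g x * df).
Proof. move=> H1 H2; exact: (is_deriveM H1 H2). Qed.

Lemma isdV (f : R -> R) (x df : R) : f x != 0 -> is_derive x (1:R) f df ->
  is_derive x (1:R) (fun y => (f y)^-1) (- (f x) ^- 2 * df).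
Proof. move=> H1 H2; exact: (is_deriveV H1 H2). Qed.

Lemma isdX3 (f : R -> R) (x df : R) : is_derive x (1:R) f df ->
  is_derive x (1:R) (fun y => f y ^+ 3) (3 * f x ^+ 2 * df).
Proof. move=> H; exact: (is_deriveX 3 H). Qed.

Lemma isdlin (c d x : R) : is_derive x (1:R) (fun y => c * y + d) c.
Proof.
apply: is_derive_eq.
have sc : forall y z : R, y *: z = y * z by [].
by rewrite !sc; ring.
Qed.

Lemma fq_derive (x : R) : 0 < Qf x -> is_derive x (1 : R) fq (dfq x).
Proof.
move=> Qp.
have hS : is_derive x (1:R) (Num.sqrt \o Qf) ((2 * Num.sqrt (Qf x))^-1 * (2 * al * x + be)).
  exact: (is_derive1_comp (is_derive1_sqrt Qp) (Qf_derive x)).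
have sp : 0 < Num.sqrt (Qf x) by rewrite sqrtr_gt0.
have h3 := isdX3 hS.
have h3n : (Num.sqrt \o Qf) x ^+ 3 != 0 by rewrite /= expf_neq0 // gt_eqF.
have hV := @isdV (fun y => (Num.sqrt \o Qf) y ^+ 3) _ _ h3n h3.
have hM := isdM (isdlin a b x) hV.
rewrite /fq; eapply is_derive_eq; first exact: hM.
rewrite /dfq /=.
have QE : Qf x = Num.sqrt (Qf x) ^+ 2 by rewrite sqr_sqrtr // ltW.
set S := Num.sqrt (Qf x) in sp QE *.
rewrite QE; clearbody S.
field; rewrite gt_eqF //.
Qed.

Definition numq (x : R) := a * Qf x - 3 / 2 * (a * x + b) * (2 * al * x + be).

Lemma dfqE x : dfq x = numq x / (Qf x ^+ 2 * Num.sqrt (Qf x)).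
Proof. by []. Qed.

Lemma sqrt_ge (s q : R) : 0 < s -> s ^+ 2 <= q -> s <= Num.sqrt q.
Proof.
move=> s0 sq.
have q0 : 0 <= q by apply: le_trans (sqr_ge0 s) sq.
rewrite -(@ler_pXn2r _ 2) //; first by rewrite sqr_sqrtr.
  by rewrite nnegrE ltW.
by rewrite nnegrE sqrtr_ge0.
Qed.

Lemma dfq_le (c s x : R) : 0 < s -> s ^+ 2 <= Qf x -> 0 <= c ->
  numq x <= c * Qf x ^+ 2 -> dfq x <= c / s.
Proof.
move=> s0 sQ c0 hN.
have Q0 : 0 < Qf x by apply: lt_le_trans sQ; rewrite exprn_gt0.
have Ss := sqrt_ge s0 sQ.
rewrite dfqE; move: (numq x) hN => N hN.
have A0 : 0 < Qf x ^+ 2 by rewrite exprn_gt0.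
move: (Qf x ^+ 2) A0 hN (Num.sqrt (Qf x)) Ss => A A0 hN S Ss.
have S0 : 0 < S by lra.
rewrite -subr_ge0.
have -> : c / s - N / (A * S) = (c * A * S - N * s) / (A * S * s).
  by field; rewrite !gt_eqF.
apply: divr_ge0; last by rewrite !mulr_ge0 // ltW.
have h1 : 0 <= c * A * (S - s).
  by apply: mulr_ge0; [exact: mulr_ge0 c0 (ltW A0)| rewrite subr_ge0].
have h2 : 0 <= (c * A - N) * s.
  by apply: mulr_ge0; [rewrite subr_ge0 | exact: ltW].
lra.
Qed.

Lemma dfq_ge (E s x : R) : 0 < s -> s ^+ 2 <= Qf x -> 0 <= E ->
  - (E * s) * Qf x ^+ 2 <= numq x -> - E <= dfq x.
Proof.
move=> s0 sQ E0 hN.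
have Q0 : 0 < Qf x by apply: lt_le_trans sQ; rewrite exprn_gt0.
have Ss := sqrt_ge s0 sQ.
rewrite dfqE; move: (numq x) hN => N hN.
have A0 : 0 < Qf x ^+ 2 by rewrite exprn_gt0.
move: (Qf x ^+ 2) A0 hN (Num.sqrt (Qf x)) Ss => A A0 hN S Ss.
have S0 : 0 < S by lra.
rewrite -subr_ge0.
have -> : N / (A * S) - - E = (N + E * A * S) / (A * S).
  by field; rewrite !gt_eqF.
apply: divr_ge0; last by rewrite !mulr_ge0 // ltW.
have h1 : 0 <= E * A * (S - s).
  by apply: mulr_ge0; [exact: mulr_ge0 E0 (ltW A0)| rewrite subr_ge0].
lra.
Qed.
End Der.
Section Self.
Variable R : realType.

Lemma sqrt_le (q w : R) : 0 <= w -> q <= w ^+ 2 -> Num.sqrt q <= w.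
Proof.
move=> w0 qw.
have [q0|q0] := lerP 0 q; last by rewrite ltr0_sqrtr.
rewrite -(@ler_pXn2r _ 2) //; first by rewrite sqr_sqrtr.
  by rewrite nnegrE sqrtr_ge0.
Qed.

Lemma self_S (rho2 u x : R) : 0 < rho2 -> 0 < u -> rho2 <= u ^+ 2 -> x < 1 ->
  0 < Num.sqrt (Qf rho2 (-2 * rho2) rho2 x) <= u * (1 - x).
Proof.
move=> r0 u0 ru x1.
have QE : Qf rho2 (-2 * rho2) rho2 x = rho2 * (1 - x) ^+ 2 by rewrite /Qf; ring.
rewrite QE; apply/andP; split.
  by rewrite sqrtr_gt0 mulr_gt0 // exprn_gt0 // subr_gt0.
apply: sqrt_le.
  by apply: mulr_ge0; [exact: ltW | rewrite subr_ge0; exact: ltW].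
rewrite exprMn; apply: ler_wpM2r => //; exact: sqr_ge0.
Qed.

Lemma self2_le (rho2 u x : R) : 0 < rho2 -> 0 < u -> rho2 <= u ^+ 2 -> x < 1 ->
  dfq rho2 (- rho2) rho2 (-2 * rho2) rho2 x <= - 2 / (u * (1 - x) ^+ 3).
Proof.
move=> r0 u0 ru x1.
have /andP[S0 Su] := self_S r0 u0 ru x1.
have QE : Qf rho2 (-2 * rho2) rho2 x = rho2 * (1 - x) ^+ 2 by rewrite /Qf; ring.
rewrite QE in S0 Su; rewrite dfqE /numq QE.
move: (Num.sqrt _) S0 Su => S S0 Su.
have x0 : 0 < 1 - x by rewrite subr_gt0.
rewrite -subr_ge0.
set L := (X in 0 <= X).
have -> : L = (2 * (u * (1 - x) - S) / (u * (1 - x) ^+ 3 * S) : R).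
  by rewrite /L; field; rewrite !gt_eqF.
apply: divr_ge0; last by rewrite !mulr_ge0 // ?exprn_ge0 // ltW.
by rewrite mulr_ge0 // subr_ge0.
Qed.

Lemma self1_ge (rho2 u x : R) : 0 < rho2 -> 0 < u -> rho2 <= u ^+ 2 -> x < 1 ->
  2 / (u * (1 - x) ^+ 3) <= dfq (- rho2) rho2 rho2 (-2 * rho2) rho2 x.
Proof.
move=> r0 u0 ru x1.
have /andP[S0 Su] := self_S r0 u0 ru x1.
have QE : Qf rho2 (-2 * rho2) rho2 x = rho2 * (1 - x) ^+ 2 by rewrite /Qf; ring.
rewrite QE in S0 Su; rewrite dfqE /numq QE.
move: (Num.sqrt _) S0 Su => S S0 Su.
have x0 : 0 < 1 - x by rewrite subr_gt0.
rewrite -subr_ge0.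
set L := (X in 0 <= X).
have -> : L = (2 * (u * (1 - x) - S) / (u * (1 - x) ^+ 3 * S) : R).
  by rewrite /L; field; rewrite !gt_eqF.
apply: divr_ge0; last by rewrite !mulr_ge0 // ?exprn_ge0 // ltW.
by rewrite mulr_ge0 // subr_ge0.
Qed.


Lemma anti_S (rho2 u x : R) : 0 < rho2 -> 0 < u -> rho2 <= u ^+ 2 -> -1 < x ->
  0 < Num.sqrt (Qf rho2 (2 * rho2) rho2 x) <= u * (1 + x).
Proof.
move=> r0 u0 ru x1.
have QE : Qf rho2 (2 * rho2) rho2 x = rho2 * (1 + x) ^+ 2 by rewrite /Qf; ring.
have x0 : 0 < 1 + x by lra.
rewrite QE; apply/andP; split.
  by rewrite sqrtr_gt0 mulr_gt0 // exprn_gt0.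
apply: sqrt_le.
  by apply: mulr_ge0; apply: ltW.
rewrite exprMn; apply: ler_wpM2r => //; exact: sqr_ge0.
Qed.

Lemma anti_le (rho2 u x a b be : R) : 0 < rho2 -> 0 < u -> rho2 <= u ^+ 2 -> -1 < x ->
  a = rho2 -> b = rho2 -> be = 2 * rho2 ->
  dfq a b rho2 be rho2 x <= - 2 / (u * (1 + x) ^+ 3).
Proof.
move=> r0 u0 ru x1 -> -> ->.
have /andP[S0 Su] := anti_S r0 u0 ru x1.
have QE : Qf rho2 (2 * rho2) rho2 x = rho2 * (1 + x) ^+ 2 by rewrite /Qf; ring.
rewrite QE in S0 Su; rewrite dfqE /numq QE.
move: (Num.sqrt _) S0 Su => S S0 Su.
have x0 : 0 < 1 + x by lra.
rewrite -subr_ge0.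
set L := (X in 0 <= X).
have -> : L = (2 * (u * (1 + x) - S) / (u * (1 + x) ^+ 3 * S) : R).
  by rewrite /L; field; rewrite !gt_eqF.
apply: divr_ge0; last by rewrite !mulr_ge0 // ?exprn_ge0 // ltW.
by rewrite mulr_ge0 // subr_ge0.
Qed.

Lemma fq_le0 (a b al be ga x : R) : a * x + b <= 0 -> fq a b al be ga x <= 0.
Proof.
move=> h; rewrite /fq; apply: mulr_le0_ge0 => //.
by rewrite invr_ge0 exprn_ge0 // sqrtr_ge0.
Qed.

Lemma fq_ge (a b al be ga x M s : R) : - M <= a * x + b -> 0 <= M -> 0 < s ->
  s ^+ 2 <= Qf al be ga x -> - (M / s ^+ 3) <= fq a b al be ga x.
Proof.
move=> hM M0 s0 sQ.
have Ss := sqrt_ge s0 sQ.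
rewrite /fq; move: (Num.sqrt _) Ss => S Ss.
have S0 : 0 < S by lra.
have h1 : - M * S ^- 3 <= (a * x + b) * S ^- 3.
  by apply: ler_wpM2r => //; rewrite invr_ge0 exprn_ge0 // ltW.
apply: le_trans h1.
rewrite mulNr lerN2; apply: ler_wpM2l => //.
rewrite lef_pV2 ?posrE ?exprn_gt0 //.
have Sn : S \is Num.nneg by rewrite nnegrE ltW.
have sn : s \is Num.nneg by rewrite nnegrE ltW.
exact: lerXn2r.
Qed.

Lemma self_fq_le (rho2 u x : R) : 0 < rho2 -> 0 < u -> rho2 <= u ^+ 2 -> x < 1 ->
  fq rho2 (- rho2) rho2 (-2 * rho2) rho2 x <= - (rho2 / (u ^+ 3 * (1 - x) ^+ 2)).
Proof.
move=> r0 u0 ru x1.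
have /andP[S0 Su] := self_S r0 u0 ru x1.
rewrite /fq; move: (Num.sqrt _) S0 Su => S S0 Su.
have x0 : 0 < 1 - x by rewrite subr_gt0.
have -> : (rho2 * x + - rho2) * S ^- 3 = - (rho2 * (1 - x) / S ^+ 3) by field; rewrite gt_eqF.
rewrite lerN2.
have -> : rho2 / (u ^+ 3 * (1 - x) ^+ 2) = rho2 * (1 - x) / (u * (1 - x)) ^+ 3.
  by field; rewrite !gt_eqF.
apply: ler_wpM2l; first by rewrite mulr_ge0 // ltW.
rewrite lef_pV2 ?posrE ?exprn_gt0 // ?mulr_gt0 //.
have Sn : S \is Num.nneg by rewrite nnegrE ltW.
have un : u * (1 - x) \is Num.nneg by rewrite nnegrE mulr_ge0 // ltW.
exact: lerXn2r.
Qed.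

Lemma sqrt3_ge (w m : R) : 0 < w -> w <= m ^+ 2 -> 0 < m -> 1 / (w * m) <= Num.sqrt w ^- 3.
Proof.
move=> w0 wm m0.
have Sm : Num.sqrt w <= m by apply: sqrt_le => //; exact: ltW.
have S0 : 0 < Num.sqrt w by rewrite sqrtr_gt0.
have -> : Num.sqrt w ^+ 3 = w * Num.sqrt w.
  by rewrite exprSr sqr_sqrtr // ltW.
rewrite mul1r lef_pV2 ?posrE ?mulr_gt0 //.
by apply: ler_wpM2l => //; exact: ltW.
Qed.

Lemma sqrt3_le (w m : R) : 0 < m -> m ^+ 2 <= w -> Num.sqrt w ^- 3 <= 1 / (w * m).
Proof.
move=> m0 mw.
have w0 : 0 < w by apply: lt_le_trans mw; rewrite exprn_gt0.
have Sm : m <= Num.sqrt w by apply: sqrt_ge.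
have S0 : 0 < Num.sqrt w by rewrite sqrtr_gt0.
have -> : Num.sqrt w ^+ 3 = w * Num.sqrt w.
  by rewrite exprSr sqr_sqrtr // ltW.
rewrite mul1r lef_pV2 ?posrE ?mulr_gt0 //.
by apply: ler_wpM2l => //; exact: ltW.
Qed.

End Self.

Section Ana.
Variable R : realType.

Lemma mvt_lt (F dF : R -> R) (lo hi s t : R) : lo < s -> s < t -> t < hi ->
  (forall x, lo < x < hi -> is_derive x (1:R) F (dF x)) ->
  (forall x, s < x < t -> dF x < 0) -> F t < F s.
Proof.
move=> ls st th hd hneg.
have [c cst E] : exists2 c, c \in `]s, t[ & F t - F s = dF c * (t - s).
  apply: MVT => //.
    move=> x; rewrite in_itv /= => /andP[sx xt]; apply: hd; apply/andP; split; lra.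
  apply: derivable_within_continuous => x; rewrite in_itv /= => /andP[sx xt].
  have /hd [] : lo < x < hi by apply/andP; split; lra.
  by [].
move: cst; rewrite in_itv /= => cst.
have := hneg _ cst.
have : 0 < t - s by lra.
move=> h1 h2; have : dF c * (t - s) < 0 by rewrite pmulr_llt0.
lra.
Qed.

Lemma isd_sum n (h : 'I_n -> R -> R) (dh : 'I_n -> R) (x : R) :
  (forall i, is_derive x (1:R) (h i) (dh i)) ->
  is_derive x (1:R) (fun y => \sum_(i < n) h i y) (\sum_(i < n) dh i).
Proof. move=> H; rewrite -fct_sumE; exact: is_derive_sum. Qed.

Lemma isdD (f g : R -> R) (x df dg : R) : is_derive x (1:R) f df -> is_derive x (1:R) g dg ->
  is_derive x (1:R) (fun y => f y + g y) (df + dg).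
Proof. move=> H1 H2; exact: (is_deriveD H1 H2). Qed.

Lemma isd_cinv3 (k x : R) : x != 0 ->
  is_derive x (1:R) (fun y => k / y ^+ 3) (- (3 * k) / x ^+ 4).
Proof.
move=> x0.
have hid : is_derive x (1:R) (fun y => 1 * y + 0) 1 by exact: isdlin.
have h3 := isdX3 hid.
have h3n : (1 * x + 0) ^+ 3 != 0 by rewrite mul1r addr0 expf_neq0.
have hV := @isdV R (fun y => (1 * y + 0) ^+ 3) _ _ h3n h3.
have hk : is_derive x (1:R) (fun y => 0 * y + k) 0 by exact: isdlin.
have hM := isdM hk hV.
eapply is_derive_eq.
  have -> : (fun y => k / y ^+ 3) = (fun y => (0 * y + k) * ((1 * y + 0) ^+ 3)^-1).
    by apply/funext => y; rewrite mul0r add0r mul1r addr0.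
  exact: hM.
rewrite mul0r add0r mul1r addr0; field; exact: x0.
Qed.

End Ana.

Section Asm.
Variable R : realType.
Variables (n : nat) (P : 'I_n -> 'rV[R]_3) (rho2 : R) (i0 : 'I_n).
Hypothesis rho2_gt0 : 0 < rho2.
Hypothesis HP0 : forall i, dotv (P i) (P i) = rho2.
Hypothesis Hlt : forall i k, i != k -> dotv (P k) (P i) < rho2.
Hypothesis HS1 : forall (G : R -> R) i,
  \sum_k G (dotv (P k) (P i)) *: P k =
  (\sum_k G (dotv (P k) (P i)) * dotv (P k) (P i) / rho2) *: P i.
Hypothesis HS2 : forall (G : R -> R) i,
  \sum_k G (dotv (P k) (P i)) = \sum_k G (dotv (P k) (P i0)).
Hypothesis HS3 : \sum_k dotv (P k) (P i0) = 0.

Local Notation v := (dd P i0).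
Local Notation K := (Kc P rho2 i0).

Hypothesis HQ : forall k (x : R), -1/2 < x < 1 -> 0 < Qf rho2 (-2 * v k) rho2 x.
Hypothesis HF : forall x : R, 0 < x < 1 ->
  - K + \sum_k dfq rho2 (- v k) rho2 (-2 * v k) rho2 x < 0.
Hypothesis HH : forall x : R, 0 < x < 1 ->
  \sum_k dfq (v k) (- rho2) rho2 (-2 * v k) rho2 x + - (3 * K) / x ^+ 4 < 0.
Variables t0 t1 : R.
Hypothesis t0P : 0 < t0 < 1.
Hypothesis t1P : 0 < t1 < 1.
Hypothesis Hp : 0 < \sum_k fq (v k) (- rho2) rho2 (-2 * v k) rho2 t0 + K / t0 ^+ 3.
Hypothesis Hn : \sum_k fq (v k) (- rho2) rho2 (-2 * v k) rho2 t1 + K / t1 ^+ 3 < 0.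

Lemma d2E t w : d2 rho2 t w = Num.sqrt (Qf rho2 (-2 * w) rho2 t).
Proof. by rewrite /d2 /Qf; congr Num.sqrt; ring. Qed.

Lemma W2E t : W2 P rho2 i0 t = \sum_k fq (v k) (- rho2) rho2 (-2 * v k) rho2 t.
Proof. by apply: eq_bigr => k _; rewrite /fq d2E; congr (_ * _); ring. Qed.

Lemma alphaE t : alpha P rho2 i0 t =
  (- K) * t + 0 + \sum_k fq rho2 (- v k) rho2 (-2 * v k) rho2 t.
Proof.
rewrite /alpha /W1 -sumrN.
have -> : \sum_k - ((v k - t * rho2) * d2 rho2 t (v k) ^- 3) =
  \sum_k fq rho2 (- v k) rho2 (-2 * v k) rho2 t.
  by apply: eq_bigr => k _; rewrite /fq d2E; ring.
ring.
Qed.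

Lemma KtE t : 0 < t -> Kt P rho2 i0 t = K / t ^+ 3.
Proof.
move=> t0'; rewrite /Kt /Kc mulr_suml; apply: eq_bigr => k _.
have -> : d3 rho2 t (v k) = t * d1 rho2 (v k).
  rewrite /d3 /d1.
  have -> : t ^+ 2 * rho2 - 2 * (t ^+ 2 * v k) + t ^+ 2 * rho2 =
            t ^+ 2 * (rho2 - 2 * v k + rho2) by ring.
  by rewrite sqrtrM ?sqr_ge0 // sqrtr_sqr ger0_norm // ltW.
by rewrite exprMn invfM; ring.
Qed.

Lemma alpha_neg t : 0 < t < 1 -> alpha P rho2 i0 t < 0.
Proof.
move=> /andP[tp t1'].
pose G := fun x => (- K) * x + 0 + \sum_k fq rho2 (- v k) rho2 (-2 * v k) rho2 x.
have G0 : G 0 = 0.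
  rewrite /G /fq.
  have -> : \sum_k (rho2 * 0 + - v k) * Num.sqrt (Qf rho2 (-2 * v k) rho2 0) ^- 3 =
            - (Num.sqrt rho2 ^- 3) * \sum_k v k.
    rewrite mulr_sumr; apply: eq_bigr => k _.
    have -> : Qf rho2 (-2 * v k) rho2 0 = rho2 by rewrite /Qf; ring.
    ring.
  by rewrite /dd HS3; ring.
rewrite alphaE -/(G t) -G0.
apply: (@mvt_lt _ G (fun x => - K + \sum_k dfq rho2 (- v k) rho2 (-2 * v k) rho2 x) (-1/2) 1).
- lra.
- exact: tp.
- exact: t1'.
- move=> x hx; apply: isdD; first exact: isdlin.
  apply: isd_sum => k; apply: fq_derive; exact: HQ.
- move=> x /andP[x0 xt]; apply: HF; apply/andP; split; lra.
Qed.

Definition Hf (x : R) := \sum_k fq (v k) (- rho2) rho2 (-2 * v k) rho2 x + K / x ^+ 3.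

Lemma Hf_dec s t : 0 < s -> s < t -> t < 1 -> Hf t < Hf s.
Proof.
move=> s0 st t1'.
apply: (@mvt_lt _ Hf (fun x => \sum_k dfq (v k) (- rho2) rho2 (-2 * v k) rho2 x +
   - (3 * K) / x ^+ 4) 0 1) => //.
- move=> x /andP[x0 x1]; apply: isdD.
    apply: isd_sum => k; apply: fq_derive; apply: HQ; apply/andP; split; lra.
  by apply: isd_cinv3; rewrite gt_eqF.
- move=> x /andP[x0 xt]; apply: HH; apply/andP; split; lra.
Qed.

Lemma thr : threshold_property P.
Proof.
apply: (@threshold_from R n P (alpha P rho2 i0) (beta P rho2 i0) Hf
  _ _ _ _ _ t0 t1) => //.
- move=> t tt ha hb; exact: (exist_cc rho2_gt0 HP0 Hlt HS1 HS2 HS3 tt ha hb).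
- move=> t tt ha hb; exact: (nonexist HP0 HS2 HS3 tt ha hb).
- exact: alpha_neg.
- move=> t /andP[tp _]; rewrite /beta /Hf KtE // W2E; ring.
- move=> s t s0 st t1'; exact: Hf_dec.
Qed.

End Asm.

Section Tet.
Variable R : realType.

Local Notation TT := (@tetra R).

Definition ttab (k i : 'I_4) : R := if val k == val i then 3 else -1.


Lemma tdot (k i : 'I_4) : dotv (TT k) (TT i) = ttab k i.
Proof.
case: k => [[|[|[|[|k]]]] hk] //; case: i => [[|[|[|[|i]]]] hi] //;
  rewrite /ttab /tetra /= /dotv !big_ord_recr !big_ord0 /= !mxE /=; ring.
Qed.


Lemma tS1 (G : R -> R) i : \sum_k G (dotv (TT k) (TT i)) *: TT k =
  (\sum_k G (dotv (TT k) (TT i)) * dotv (TT k) (TT i) / 3) *: TT i.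
Proof.
under eq_bigr do rewrite tdot. under [in RHS]eq_bigr do rewrite tdot.
case: i => [[|[|[|[|i]]]] hi] //; rewrite !big_ord_recr !big_ord0 /= /ttab /=;
  apply/rowP => l; rewrite !mxE /tetra /=;
  case: l => [[|[|[|l]]] hl] //=; rewrite ?mxE /=; field; rewrite ?pnatr_eq0 //.
Qed.

Lemma tS2 (G : R -> R) i : \sum_k G (dotv (TT k) (TT i)) =
  \sum_k G (dotv (TT k) (TT ord0)).
Proof.
under eq_bigr do rewrite tdot. under [in RHS]eq_bigr do rewrite tdot.
case: i => [[|[|[|[|i]]]] hi] //; rewrite !big_ord_recr !big_ord0 /= /ttab /=; ring.
Qed.

Lemma tS3 : \sum_k dotv (TT k) (TT ord0) = 0.
Proof.
under eq_bigr do rewrite tdot.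
rewrite !big_ord_recr !big_ord0 /= /ttab /=; ring.
Qed.

Lemma tP0 i : dotv (TT i) (TT i) = 3.
Proof. by rewrite tdot /ttab eqxx. Qed.

Lemma tlt i k : i != k -> dotv (TT k) (TT i) < 3.
Proof.
move=> ik; rewrite tdot /ttab; case: eqP => [e|_]; last lra.
by move: ik; rewrite (val_inj e) eqxx.
Qed.

End Tet.

Section Oct.
Variable R : realType.

Local Notation OO := (@octa R).

Definition otab (k i : 'I_6) : R := if val k == val i then 1 else if (val k)./2 == (val i)./2 then -1 else 0.


Lemma odot (k i : 'I_6) : dotv (OO k) (OO i) = otab k i.
Proof.
case: k => [[|[|[|[|[|[|k]]]]]] hk] //; case: i => [[|[|[|[|[|[|i]]]]]] hi] //;
  rewrite /otab /octa /= /dotv !big_ord_recr !big_ord0 /= !mxE /=; ring.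
Qed.


Lemma oS1 (G : R -> R) i : \sum_k G (dotv (OO k) (OO i)) *: OO k =
  (\sum_k G (dotv (OO k) (OO i)) * dotv (OO k) (OO i) / 1) *: OO i.
Proof.
under eq_bigr do rewrite odot. under [in RHS]eq_bigr do rewrite odot.
case: i => [[|[|[|[|[|[|i]]]]]] hi] //; rewrite !big_ord_recr !big_ord0 /= /otab /=;
  apply/rowP => l; rewrite !mxE /octa /=;
  case: l => [[|[|[|l]]] hl] //=; rewrite ?mxE /=; field; rewrite ?pnatr_eq0 //.
Qed.

Lemma oS2 (G : R -> R) i : \sum_k G (dotv (OO k) (OO i)) =
  \sum_k G (dotv (OO k) (OO ord0)).
Proof.
under eq_bigr do rewrite odot. under [in RHS]eq_bigr do rewrite odot.
case: i => [[|[|[|[|[|[|i]]]]]] hi] //; rewrite !big_ord_recr !big_ord0 /= /otab /=; ring.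
Qed.

Lemma oS3 : \sum_k dotv (OO k) (OO ord0) = 0.
Proof.
under eq_bigr do rewrite odot.
rewrite !big_ord_recr !big_ord0 /= /otab /=; ring.
Qed.

Lemma oP0 i : dotv (OO i) (OO i) = 1.
Proof. by rewrite odot /otab; case: i => [[|[|[|[|[|[|i]]]]]] hi] //=. Qed.

Lemma olt i k : i != k -> dotv (OO k) (OO i) < 1.
Proof.
rewrite odot /otab -val_eqE; case: i => [[|[|[|[|[|[|i]]]]]] hi] //; case: k => [[|[|[|[|[|[|k]]]]]] hk] //=;
  try (move=> _; lra); by [].
Qed.

End Oct.

Section Cub.
Variable R : realType.

Local Notation CC := (@cube R).

Definition ham (k i : nat) : nat := (odd k != odd i) + (odd k./2 != odd i./2) + (odd k./2./2 != odd i./2./2).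
Definition ctab (k i : 'I_8) : R := match ham k i with 0 => 3 | 1 => 1 | 2 => -1 | _ => -3 end.


Lemma cdot (k i : 'I_8) : dotv (CC k) (CC i) = ctab k i.
Proof.
case: k => [[|[|[|[|[|[|[|[|k]]]]]]]] hk] //; case: i => [[|[|[|[|[|[|[|[|i]]]]]]]] hi] //;
  rewrite /ctab /cube /= /dotv !big_ord_recr !big_ord0 /= !mxE /=; ring.
Qed.


Lemma cS1 (G : R -> R) i : \sum_k G (dotv (CC k) (CC i)) *: CC k =
  (\sum_k G (dotv (CC k) (CC i)) * dotv (CC k) (CC i) / 3) *: CC i.
Proof.
under eq_bigr do rewrite cdot. under [in RHS]eq_bigr do rewrite cdot.
case: i => [[|[|[|[|[|[|[|[|i]]]]]]]] hi] //; rewrite !big_ord_recr !big_ord0 /= /ctab /=;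
  apply/rowP => l; rewrite !mxE /cube /=;
  case: l => [[|[|[|l]]] hl] //=; rewrite ?mxE /=; field; rewrite ?pnatr_eq0 //.
Qed.

Lemma cS2 (G : R -> R) i : \sum_k G (dotv (CC k) (CC i)) =
  \sum_k G (dotv (CC k) (CC ord0)).
Proof.
under eq_bigr do rewrite cdot. under [in RHS]eq_bigr do rewrite cdot.
case: i => [[|[|[|[|[|[|[|[|i]]]]]]]] hi] //; rewrite !big_ord_recr !big_ord0 /= /ctab /=; ring.
Qed.

Lemma cS3 : \sum_k dotv (CC k) (CC ord0) = 0.
Proof.
under eq_bigr do rewrite cdot.
rewrite !big_ord_recr !big_ord0 /= /ctab /=; ring.
Qed.

Lemma cP0 i : dotv (CC i) (CC i) = 3.
Proof. by rewrite cdot /ctab; case: i => [[|[|[|[|[|[|[|[|i]]]]]]]] hi] //=. Qed.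

Lemma clt i k : i != k -> dotv (CC k) (CC i) < 3.
Proof.
rewrite cdot /ctab -val_eqE; case: i => [[|[|[|[|[|[|[|[|i]]]]]]]] hi] //; case: k => [[|[|[|[|[|[|[|[|k]]]]]]]] hk] //=;
  try (move=> _; lra); by [].
Qed.

End Cub.

Section Common.
Variable R : realType.

Lemma inv_pow_ge (y : R) (n : nat) : 0 < y -> y <= 1/2 -> 2 ^+ n <= (y ^+ n)^-1.
Proof.
move=> y0 yh.
have -> : (2 : R) ^+ n = ((1/2) ^+ n)^-1 by rewrite div1r exprVn invrK.
have h2 : (0 : R) < 1/2 by lra.
have p1 : (1/2 : R) ^+ n \is Num.pos. rewrite posrE. exact: exprn_gt0.
have p2 : y ^+ n \is Num.pos by rewrite posrE exprn_gt0.
rewrite lef_pV2 //.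
have yn : y \is Num.nneg by rewrite nnegrE ltW.
have hn : (1/2 : R) \is Num.nneg by rewrite nnegrE ltW.
exact: lerXn2r.
Qed.


Lemma ndiv_le (c a b : R) : 0 <= c -> 0 < a -> 0 < b -> b <= 1 -> - c / (a * b) <= - c / a.
Proof.
move=> c0 a0 b0 b1.
rewrite !mulNr lerN2; apply: ler_wpM2l => //.
rewrite lef_pV2 ?posrE ?mulr_gt0 //.
by rewrite ger_pMr.
Qed.

Lemma pow3_le1 (y : R) : 0 < y -> y <= 1 -> y ^+ 3 <= 1.
Proof. move=> y0 y1; apply: exprn_ile1 => //; exact: ltW. Qed.

Lemma sqrt3_pos : (0 : R) < Num.sqrt 3.
Proof. by rewrite sqrtr_gt0. Qed.

Lemma sqrt3_sq : (Num.sqrt 3 : R) ^+ 2 = 3.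
Proof. by rewrite sqr_sqrtr. Qed.

Lemma inv_cubes_ge (x : R) : 0 < x < 1 -> 2 <= ((1 - x) ^+ 3)^-1 + ((1 + x) ^+ 3)^-1.
Proof.
move=> /andP[x0 x1].
have a0 : 0 < 1 - x by lra.
have b0 : 0 < 1 + x by lra.
have A0 : 0 < ((1 - x) ^+ 3)^-1 by rewrite invr_gt0 exprn_gt0.
have B0 : 0 < ((1 + x) ^+ 3)^-1 by rewrite invr_gt0 exprn_gt0.
have AB : 1 <= ((1 - x) ^+ 3)^-1 * ((1 + x) ^+ 3)^-1.
  rewrite -invfM -exprMn.
  have c0 : 0 < (1 - x) * (1 + x) by rewrite mulr_gt0.
  have c1 : (1 - x) * (1 + x) <= 1 by nra.
  rewrite -[X in X <= _]invr1 lef_pV2 ?posrE ?exprn_gt0 //.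
  apply: exprn_ile1 => //; exact: ltW.
move: (((1 - x) ^+ 3)^-1) (((1 + x) ^+ 3)^-1) A0 B0 AB => A B A0 B0 AB.
have := sqr_ge0 (A - B); rewrite expr2 => h.
nra.
Qed.

End Common.

Section TetA.
Variable R : realType.
Local Notation TT := (@tetra R).

Lemma tv k : dd TT ord0 k = ttab R k ord0.
Proof. exact: tdot. Qed.

Lemma tKc : Kc TT 3 ord0 = 3 * (4 * d1 3 (-1 : R) ^- 3).
Proof.
rewrite /Kc; under eq_bigr do rewrite tv.
rewrite !big_ord_recr !big_ord0 /= /ttab /=; ring.
Qed.

Lemma tKc_lo : 1/2 <= Kc TT 3 ord0.
Proof.
rewrite tKc /d1.
have := @sqrt3_ge R (3 - 2 * -1 + 3) 3.
have h1 : (0 : R) < 3 - 2 * -1 + 3 by lra.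
have h2 : (3 - 2 * -1 + 3 : R) <= 3 ^+ 2 by rewrite expr2; lra.
move=> /(_ h1 h2) /(_ ltac:(lra)).
move: (Num.sqrt _ ^- 3) => X hX.
have e : (1 / ((3 - 2 * -1 + 3) * 3) : R) = 1/24 by field.
rewrite e in hX; lra.
Qed.


Lemma tKc_hi : Kc TT 3 ord0 <= 3/5.
Proof.
rewrite tKc /d1.
have := @sqrt3_le R (3 - 2 * -1 + 3) (14/5).
have h1 : (0 : R) < 14/5 by lra.
have h2 : ((14/5) ^+ 2 : R) <= 3 - 2 * -1 + 3 by rewrite expr2; lra.
move=> /(_ h1 h2).
move: (Num.sqrt _ ^- 3) => X hX.
have e : (1 / ((3 - 2 * -1 + 3) * (14/5)) : R) = 5/112 by field.
rewrite e in hX; lra.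
Qed.

Lemma tHQ k (x : R) : -1/2 < x < 1 -> 0 < Qf 3 (-2 * dd TT ord0 k) 3 x.
Proof.
move=> /andP[x0 x1]; rewrite tv /ttab /Qf; case: ifP => _.
  have : 0 < 1 - x by lra.
  nra.
nra.
Qed.

Lemma tHF x : 0 < x < 1 ->
  - Kc TT 3 ord0 + \sum_k dfq 3 (- dd TT ord0 k) 3 (-2 * dd TT ord0 k) 3 x < 0.
Proof.
move=> /andP[x0 x1].
under eq_bigr do rewrite tv.
rewrite !big_ord_recr !big_ord0 /= /ttab /=.
have s3 := @sqrt3_pos R.
have hs := @self2_le R 3 (Num.sqrt 3) x ltac:(lra) s3 ltac:(rewrite sqrt3_sq; lra) x1.
have hn := @dfq_le R 3 (- -1) 3 (-2 * -1) 3 (2/3) (Num.sqrt 3) x s3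
  ltac:(rewrite sqrt3_sq /Qf; nra) ltac:(lra) ltac:(rewrite /numq /Qf; nra).
have hu := @ndiv_le R 2 (Num.sqrt 3) ((1 - x) ^+ 3) ltac:(lra) s3
   ltac:(rewrite exprn_gt0 //; lra) ltac:(apply: pow3_le1; lra).
have kp := tKc_lo.
lra.
Qed.


Lemma tHH x : 0 < x < 1 ->
  \sum_k dfq (dd TT ord0 k) (- 3) 3 (-2 * dd TT ord0 k) 3 x + - (3 * Kc TT 3 ord0) / x ^+ 4 < 0.
Proof.
move=> /andP[x0 x1].
under eq_bigr do rewrite tv.
rewrite !big_ord_recr !big_ord0 /= /ttab /=.
have hs := @self2_le R 3 2 x ltac:(lra) ltac:(lra) ltac:(rewrite expr2; lra) x1.
have h3 : 0 <= x ^+ 3 by rewrite exprn_ge0 // ltW.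
have h4 : 0 <= x ^+ 4 by rewrite exprn_ge0 // ltW.
have hsq := sqr_ge0 (x - 2/5).
have hn := @dfq_le R (-1) (- 3) 3 (-2 * -1) 3 (11/10) (17/10) x ltac:(lra)
  ltac:(rewrite expr2 /Qf; nra) ltac:(lra)
  ltac:(rewrite /numq /Qf; rewrite expr2 in hsq; nra).
have kp := tKc_lo.
have y0 : 0 < 1 - x by lra.
have e1 : -2 / (2 * (1 - x) ^+ 3) = - ((1 - x) ^+ 3)^-1 :> R by field; rewrite gt_eqF // exprn_gt0.
rewrite e1 in hs.
have i1 : 0 < ((1 - x) ^+ 3)^-1 by rewrite invr_gt0 exprn_gt0.
have i2 : 0 < (x ^+ 4)^-1 by rewrite invr_gt0 exprn_gt0.
have e2 : - (3 * Kc TT 3 ord0) / x ^+ 4 = - (3 * Kc TT 3 ord0 * (x ^+ 4)^-1) by ring.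
rewrite e2.
have [xh|xh] := lerP x (1/2).
  have := inv_pow_ge 4 x0 xh.
  move: ((x ^+ 4)^-1) i2 => X i2 hX.
  have : 24 <= 3 * Kc TT 3 ord0 * X by nra.
  lra.
have := @inv_pow_ge R (1 - x) 3 y0 ltac:(lra).
move: ((1 - x) ^+ 3)^-1 i1 hs => Y i1 hs hY.
have : 0 <= 3 * Kc TT 3 ord0 * (x ^+ 4)^-1 by rewrite !mulr_ge0 // ?ltW //; lra.
lra.
Qed.

Lemma tHp : 0 < \sum_k fq (dd TT ord0 k) (- 3) 3 (-2 * dd TT ord0 k) 3 (1/10) +
   Kc TT 3 ord0 / (1/10) ^+ 3.
Proof.
under eq_bigr do rewrite tv.
rewrite !big_ord_recr !big_ord0 /= /ttab /=.
have h1 := @fq_ge R 3 (- 3) 3 (-2 * 3) 3 (1/10) 3 (3/2) ltac:(lra) ltac:(lra) ltac:(lra)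
  ltac:(rewrite expr2 /Qf; lra).
have h2 := @fq_ge R (-1) (- 3) 3 (-2 * -1) 3 (1/10) 4 (3/2) ltac:(lra) ltac:(lra) ltac:(lra)
  ltac:(rewrite expr2 /Qf; lra).
have kp := tKc_lo.
have e : Kc TT 3 ord0 / (1/10) ^+ 3 = 1000 * Kc TT 3 ord0 by field.
have e3 : (3 / 2 : R) ^+ 3 = 27/8 by field.
rewrite e3 in h1 h2; rewrite e; lra.
Qed.

Lemma tHn : \sum_k fq (dd TT ord0 k) (- 3) 3 (-2 * dd TT ord0 k) 3 (9/10) +
   Kc TT 3 ord0 / (9/10) ^+ 3 < 0.
Proof.
under eq_bigr do rewrite tv.
rewrite !big_ord_recr !big_ord0 /= /ttab /=.
have h1 := @self_fq_le R 3 2 (9/10) ltac:(lra) ltac:(lra) ltac:(rewrite expr2; lra) ltac:(lra).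
have h2 := @fq_le0 R (-1) (- 3) 3 (-2 * -1) 3 (9/10) ltac:(lra).
have kp := tKc_hi.
have e : Kc TT 3 ord0 / (9/10) ^+ 3 = 1000/729 * Kc TT 3 ord0 by field.
have e3 : (3 / ((2 : R) ^+ 3 * (1 - 9 / 10) ^+ 2)) = 75/2 by field.
rewrite e3 in h1; rewrite e; lra.
Qed.

Theorem tetra_thr : threshold_property TT.
Proof.
have r0 : (0 : R) < 3 by lra.
have a : ((0:R) < 1/10) && (1/10 < (1:R)) by apply/andP; split; lra.
have b : ((0:R) < 9/10) && (9/10 < (1:R)) by apply/andP; split; lra.
have T := (@thr R 4 TT 3 ord0 r0 (@tP0 R) (@tlt R) (@tS1 R) (@tS2 R) (@tS3 R) tHQ tHF tHH (1/10) (9/10) a b tHp tHn).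
exact T.
Qed.

End TetA.

Section OctA.
Variable R : realType.
Local Notation OO := (@octa R).

Lemma ov k : dd OO ord0 k = otab R k ord0.
Proof. exact: odot. Qed.

Ltac fside := do ?[apply/andP; split]; rewrite ?gt_eqF //; try lra.

Ltac oexp := under eq_bigr do rewrite ov; rewrite !big_ord_recr !big_ord0 /= /otab /=.

Lemma oKc : Kc OO 1 ord0 = 2 * d1 1 (-1 : R) ^- 3 + 4 * (1 * d1 1 (0 : R) ^- 3).
Proof. rewrite /Kc; oexp; ring. Qed.

Lemma oKc_lo : 19/12 <= Kc OO 1 ord0.
Proof.
rewrite oKc /d1.
have := @sqrt3_ge R (1 - 2 * -1 + 1) 2 ltac:(lra) ltac:(rewrite expr2; lra) ltac:(lra).
have := @sqrt3_ge R (1 - 2 * 0 + 1) (3/2) ltac:(lra) ltac:(rewrite expr2; lra) ltac:(lra).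
move: (Num.sqrt (1 - 2 * -1 + 1) ^- 3) (Num.sqrt (1 - 2 * 0 + 1) ^- 3) => X Y hY hX.
have e1 : (1 / ((1 - 2 * -1 + 1) * 2) : R) = 1/8 by field.
have e2 : (1 / ((1 - 2 * 0 + 1) * (3/2)) : R) = 1/3 by field.
rewrite e1 in hX; rewrite e2 in hY; lra.
Qed.

Lemma oKc_hi : Kc OO 1 ord0 <= 17/10.
Proof.
rewrite oKc /d1.
have := @sqrt3_le R (1 - 2 * -1 + 1) 2 ltac:(lra) ltac:(rewrite expr2; lra).
have := @sqrt3_le R (1 - 2 * 0 + 1) (7/5) ltac:(lra) ltac:(rewrite expr2; lra).
move: (Num.sqrt (1 - 2 * -1 + 1) ^- 3) (Num.sqrt (1 - 2 * 0 + 1) ^- 3) => X Y hY hX.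
have e1 : (1 / ((1 - 2 * -1 + 1) * 2) : R) = 1/8 by field.
have e2 : (1 / ((1 - 2 * 0 + 1) * (7/5)) : R) = 5/14 by field.
rewrite e1 in hX; rewrite e2 in hY; lra.
Qed.

Lemma oHQ k (x : R) : -1/2 < x < 1 -> 0 < Qf 1 (-2 * dd OO ord0 k) 1 x.
Proof.
move=> /andP[x0 x1]; rewrite ov /otab /Qf; case: ifP => _; last case: ifP => _.
- have : 0 < 1 - x by lra.
  nra.
- have : 0 < 1 + x by lra.
  nra.
- nra.
Qed.

Lemma oHF x : 0 < x < 1 ->
  - Kc OO 1 ord0 + \sum_k dfq 1 (- dd OO ord0 k) 1 (-2 * dd OO ord0 k) 1 x < 0.
Proof.
move=> /andP[x0 x1].
oexp.
have hs := @self2_le R 1 1 x ltac:(lra) ltac:(lra) ltac:(rewrite expr2; lra) x1.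
have ha := @anti_le R 1 1 x 1 (- -1) (-2 * -1) ltac:(lra) ltac:(lra) ltac:(rewrite expr2; lra)
  ltac:(lra) ltac:(lra) ltac:(lra) ltac:(lra).
have hn := @dfq_le R 1 (- 0) 1 (-2 * 0) 1 1 1 x ltac:(lra)
  ltac:(rewrite expr2 /Qf; nra) ltac:(lra) ltac:(rewrite /numq /Qf; nra).
have kp := oKc_lo.
have hc := @inv_cubes_ge R x ltac:(apply/andP; split; lra).
have e1 : -2 / (1 * (1 - x) ^+ 3) = - ((1 - x) ^+ 3)^-1 * 2 :> R.
  by field; fside.
have e2 : -2 / (1 * (1 + x) ^+ 3) = - ((1 + x) ^+ 3)^-1 * 2 :> R.
  by field; fside.
rewrite e1 in hs; rewrite e2 in ha.
lra.
Qed.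

Lemma oHH x : 0 < x < 1 ->
  \sum_k dfq (dd OO ord0 k) (- 1) 1 (-2 * dd OO ord0 k) 1 x + - (3 * Kc OO 1 ord0) / x ^+ 4 < 0.
Proof.
move=> /andP[x0 x1].
oexp.
have hs := @self2_le R 1 1 x ltac:(lra) ltac:(lra) ltac:(rewrite expr2; lra) x1.
have h3 : 0 <= x ^+ 3 by rewrite exprn_ge0 // ltW.
have h4 : 0 <= x ^+ 4 by rewrite exprn_ge0 // ltW.
have hsq := sqr_ge0 (x - 3/5).
have ha := @dfq_le R (-1) (- 1) 1 (-2 * -1) 1 2 1 x ltac:(lra)
  ltac:(rewrite expr2 /Qf; nra) ltac:(lra) ltac:(rewrite /numq /Qf; nra).
have hn := @dfq_le R 0 (- 1) 1 (-2 * 0) 1 (11/10) 1 x ltac:(lra)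
  ltac:(rewrite expr2 /Qf; nra) ltac:(lra) ltac:(rewrite /numq /Qf; rewrite expr2 in hsq; nra).
have kp := oKc_lo.
have y0 : 0 < 1 - x by lra.
have e1 : -2 / (1 * (1 - x) ^+ 3) = - ((1 - x) ^+ 3)^-1 * 2 :> R by field; fside.
rewrite e1 in hs.
have i1 : 0 < ((1 - x) ^+ 3)^-1 by rewrite invr_gt0 exprn_gt0.
have i2 : 0 < (x ^+ 4)^-1 by rewrite invr_gt0 exprn_gt0.
have e2 : - (3 * Kc OO 1 ord0) / x ^+ 4 = - (3 * Kc OO 1 ord0 * (x ^+ 4)^-1) by ring.
rewrite e2.
have [xh|xh] := lerP x (1/2).
  have := inv_pow_ge 4 x0 xh.
  move: ((x ^+ 4)^-1) i2 => X i2 hX.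
  have : 24 <= 3 * Kc OO 1 ord0 * X by nra.
  lra.
have := @inv_pow_ge R (1 - x) 3 y0 ltac:(lra).
move: ((1 - x) ^+ 3)^-1 i1 hs => Y i1 hs hY.
have : 0 <= 3 * Kc OO 1 ord0 * (x ^+ 4)^-1 by rewrite !mulr_ge0 // ?ltW //; lra.
lra.
Qed.

Lemma oHp : 0 < \sum_k fq (dd OO ord0 k) (- 1) 1 (-2 * dd OO ord0 k) 1 (1/10) +
   Kc OO 1 ord0 / (1/10) ^+ 3.
Proof.
oexp.
have h1 := @fq_ge R 1 (- 1) 1 (-2 * 1) 1 (1/10) 1 (4/5) ltac:(lra) ltac:(lra) ltac:(lra)
  ltac:(rewrite expr2 /Qf; lra).
have h2 := @fq_ge R (-1) (- 1) 1 (-2 * -1) 1 (1/10) 2 1 ltac:(lra) ltac:(lra) ltac:(lra)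
  ltac:(rewrite expr2 /Qf; lra).
have h3 := @fq_ge R 0 (- 1) 1 (-2 * 0) 1 (1/10) 1 1 ltac:(lra) ltac:(lra) ltac:(lra)
  ltac:(rewrite expr2 /Qf; lra).
have kp := oKc_lo.
have e : Kc OO 1 ord0 / (1/10) ^+ 3 = 1000 * Kc OO 1 ord0 by field.
have e3 : (4 / 5 : R) ^+ 3 = 64/125 by field.
rewrite e3 in h1; rewrite e; lra.
Qed.

Lemma oHn : \sum_k fq (dd OO ord0 k) (- 1) 1 (-2 * dd OO ord0 k) 1 (9/10) +
   Kc OO 1 ord0 / (9/10) ^+ 3 < 0.
Proof.
oexp.
have h1 := @self_fq_le R 1 1 (9/10) ltac:(lra) ltac:(lra) ltac:(rewrite expr2; lra) ltac:(lra).
have h2 := @fq_le0 R (-1) (- 1) 1 (-2 * -1) 1 (9/10) ltac:(lra).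
have h3 := @fq_le0 R 0 (- 1) 1 (-2 * 0) 1 (9/10) ltac:(lra).
have kp := oKc_hi.
have e : Kc OO 1 ord0 / (9/10) ^+ 3 = 1000/729 * Kc OO 1 ord0 by field.
have e3 : (1 / ((1 : R) ^+ 3 * (1 - 9 / 10) ^+ 2)) = 100 by field.
rewrite e3 in h1; rewrite e; lra.
Qed.

Theorem octa_thr : threshold_property OO.
Proof.
have r0 : (0 : R) < 1 by lra.
have a : ((0:R) < 1/10) && (1/10 < (1:R)) by apply/andP; split; lra.
have b : ((0:R) < 9/10) && (9/10 < (1:R)) by apply/andP; split; lra.
have T := (@thr R 6 OO 1 ord0 r0 (@oP0 R) (@olt R) (@oS1 R) (@oS2 R) (@oS3 R) oHQ oHF oHH (1/10) (9/10) a b oHp oHn).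
exact T.
Qed.

End OctA.

Section CubA.
Variable R : realType.
Local Notation CC := (@cube R).

Lemma cv k : dd CC ord0 k = ctab R k ord0.
Proof. exact: cdot. Qed.

Ltac fside2 := do ?[apply/andP; split]; rewrite ?gt_eqF //; try lra.
Ltac cexp := under eq_bigr do rewrite cv; rewrite !big_ord_recr !big_ord0 /= /ctab /ham /=.

Lemma cKc : Kc CC 3 ord0 = 3 * (2 * d1 3 (1 : R) ^- 3) + 3 * (4 * d1 3 (-1 : R) ^- 3)
   + 6 * d1 3 (-3 : R) ^- 3.
Proof. rewrite /Kc; cexp; ring. Qed.

Lemma cKc_lo : 11/8 <= Kc CC 3 ord0.
Proof.
rewrite cKc /d1.
have := @sqrt3_ge R (3 - 2 * 1 + 3) 2 ltac:(lra) ltac:(rewrite expr2; lra) ltac:(lra).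
have := @sqrt3_ge R (3 - 2 * -1 + 3) 3 ltac:(lra) ltac:(rewrite expr2; lra) ltac:(lra).
have := @sqrt3_ge R (3 - 2 * -3 + 3) 4 ltac:(lra) ltac:(rewrite expr2; lra) ltac:(lra).
move: (Num.sqrt (3 - 2 * 1 + 3) ^- 3) (Num.sqrt (3 - 2 * -1 + 3) ^- 3)
  (Num.sqrt (3 - 2 * -3 + 3) ^- 3) => X Y Z hZ hY hX.
have e1 : (1 / ((3 - 2 * 1 + 3) * 2) : R) = 1/8 by field.
have e2 : (1 / ((3 - 2 * -1 + 3) * 3) : R) = 1/24 by field.
have e3 : (1 / ((3 - 2 * -3 + 3) * 4) : R) = 1/48 by field.
rewrite e1 in hX; rewrite e2 in hY; rewrite e3 in hZ; lra.
Qed.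

Lemma cKc_hi : Kc CC 3 ord0 <= 3/2.
Proof.
rewrite cKc /d1.
have := @sqrt3_le R (3 - 2 * 1 + 3) 2 ltac:(lra) ltac:(rewrite expr2; lra).
have := @sqrt3_le R (3 - 2 * -1 + 3) (14/5) ltac:(lra) ltac:(rewrite expr2; lra).
have := @sqrt3_le R (3 - 2 * -3 + 3) (17/5) ltac:(lra) ltac:(rewrite expr2; lra).
move: (Num.sqrt (3 - 2 * 1 + 3) ^- 3) (Num.sqrt (3 - 2 * -1 + 3) ^- 3)
  (Num.sqrt (3 - 2 * -3 + 3) ^- 3) => X Y Z hZ hY hX.
have e1 : (1 / ((3 - 2 * 1 + 3) * 2) : R) = 1/8 by field.
have e2 : (1 / ((3 - 2 * -1 + 3) * (14/5)) : R) = 5/112 by field.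
have e3 : (1 / ((3 - 2 * -3 + 3) * (17/5)) : R) = 5/204 by field.
rewrite e1 in hX; rewrite e2 in hY; rewrite e3 in hZ; lra.
Qed.

Lemma cHQ k (x : R) : -1/2 < x < 1 -> 0 < Qf 3 (-2 * dd CC ord0 k) 3 x.
Proof.
move=> /andP[x0 x1]; rewrite cv /ctab /Qf.
have : 0 < 1 - x by lra.
have : 0 < 1 + x by lra.
by case: (ham _ _) => [|[|[|?]]] /=; nra.
Qed.

Lemma cHF x : 0 < x < 1 ->
  - Kc CC 3 ord0 + \sum_k dfq 3 (- dd CC ord0 k) 3 (-2 * dd CC ord0 k) 3 x < 0.
Proof.
move=> /andP[x0 x1].
cexp.
have hs := @self2_le R 3 (7/4) x ltac:(lra) ltac:(lra) ltac:(rewrite expr2; lra) x1.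
have ha := @anti_le R 3 (7/4) x 3 (- -3) (-2 * -3) ltac:(lra) ltac:(lra) ltac:(rewrite expr2; lra)
  ltac:(lra) ltac:(lra) ltac:(lra) ltac:(lra).
have hsq := sqr_ge0 (x - 1/3).
have h1 := @dfq_le R 3 (- 1) 3 (-2 * 1) 3 (6/5) (8/5) x ltac:(lra)
  ltac:(rewrite expr2 /Qf; nra) ltac:(lra) ltac:(rewrite /numq /Qf; rewrite expr2 in hsq; nra).
have h2 := @dfq_le R 3 (- -1) 3 (-2 * -1) 3 (2/3) (17/10) x ltac:(lra)
  ltac:(rewrite expr2 /Qf; nra) ltac:(lra) ltac:(rewrite /numq /Qf; nra).
have kp := cKc_lo.
have hc := @inv_cubes_ge R x ltac:(apply/andP; split; lra).
have e1 : -2 / (7/4 * (1 - x) ^+ 3) = - ((1 - x) ^+ 3)^-1 * (8/7) :> R by field; fside2.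
have e2 : -2 / (7/4 * (1 + x) ^+ 3) = - ((1 + x) ^+ 3)^-1 * (8/7) :> R by field; fside2.
rewrite e1 in hs; rewrite e2 in ha.
lra.
Qed.

Lemma cHH x : 0 < x < 1 ->
  \sum_k dfq (dd CC ord0 k) (- 3) 3 (-2 * dd CC ord0 k) 3 x + - (3 * Kc CC 3 ord0) / x ^+ 4 < 0.
Proof.
move=> /andP[x0 x1].
cexp.
have hs := @self2_le R 3 2 x ltac:(lra) ltac:(lra) ltac:(rewrite expr2; lra) x1.
have h3 : 0 <= x ^+ 3 by rewrite exprn_ge0 // ltW.
have h4 : 0 <= x ^+ 4 by rewrite exprn_ge0 // ltW.
have hsq := sqr_ge0 (x - 2/5).
have hsq2 := sqr_ge0 (x - 3/4).
have h1 := @dfq_le R 1 (- 3) 3 (-2 * 1) 3 (6/5) (8/5) x ltac:(lra)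
  ltac:(rewrite expr2 /Qf; nra) ltac:(lra) ltac:(rewrite /numq /Qf; rewrite expr2 in hsq2; nra).
have h2 := @dfq_le R (-1) (- 3) 3 (-2 * -1) 3 (11/10) (17/10) x ltac:(lra)
  ltac:(rewrite expr2 /Qf; nra) ltac:(lra) ltac:(rewrite /numq /Qf; rewrite expr2 in hsq; nra).
have h5 := @dfq_le R (-3) (- 3) 3 (-2 * -3) 3 2 (17/10) x ltac:(lra)
  ltac:(rewrite expr2 /Qf; nra) ltac:(lra) ltac:(rewrite /numq /Qf; nra).
have kp := cKc_lo.
have y0 : 0 < 1 - x by lra.
have e1 : -2 / (2 * (1 - x) ^+ 3) = - ((1 - x) ^+ 3)^-1 :> R by field; fside2.
rewrite e1 in hs.
have i1 : 0 < ((1 - x) ^+ 3)^-1 by rewrite invr_gt0 exprn_gt0.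
have i2 : 0 < (x ^+ 4)^-1 by rewrite invr_gt0 exprn_gt0.
have e2 : - (3 * Kc CC 3 ord0) / x ^+ 4 = - (3 * Kc CC 3 ord0 * (x ^+ 4)^-1) by ring.
rewrite e2.
have [xh|xh] := lerP x (1/2).
  have := inv_pow_ge 4 x0 xh.
  move: ((x ^+ 4)^-1) i2 => X i2 hX.
  have : 24 <= 3 * Kc CC 3 ord0 * X by nra.
  lra.
have := @inv_pow_ge R (1 - x) 3 y0 ltac:(lra).
move: ((1 - x) ^+ 3)^-1 i1 hs => Y i1 hs hY.
have : 0 <= 3 * Kc CC 3 ord0 * (x ^+ 4)^-1 by rewrite !mulr_ge0 // ?ltW //; lra.
lra.
Qed.

Lemma cHp : 0 < \sum_k fq (dd CC ord0 k) (- 3) 3 (-2 * dd CC ord0 k) 3 (1/10) +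
   Kc CC 3 ord0 / (1/10) ^+ 3.
Proof.
cexp.
have h1 := @fq_ge R 3 (- 3) 3 (-2 * 3) 3 (1/10) 3 (3/2) ltac:(lra) ltac:(lra) ltac:(lra)
  ltac:(rewrite expr2 /Qf; lra).
have h2 := @fq_ge R 1 (- 3) 3 (-2 * 1) 3 (1/10) 4 (3/2) ltac:(lra) ltac:(lra) ltac:(lra)
  ltac:(rewrite expr2 /Qf; lra).
have h3 := @fq_ge R (-1) (- 3) 3 (-2 * -1) 3 (1/10) 4 (3/2) ltac:(lra) ltac:(lra) ltac:(lra)
  ltac:(rewrite expr2 /Qf; lra).
have h4 := @fq_ge R (-3) (- 3) 3 (-2 * -3) 3 (1/10) 4 (3/2) ltac:(lra) ltac:(lra) ltac:(lra)
  ltac:(rewrite expr2 /Qf; lra).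
have kp := cKc_lo.
have e : Kc CC 3 ord0 / (1/10) ^+ 3 = 1000 * Kc CC 3 ord0 by field.
have e3 : (3 / 2 : R) ^+ 3 = 27/8 by field.
rewrite e3 in h1 h2 h3 h4; rewrite e; lra.
Qed.

Lemma cHn : \sum_k fq (dd CC ord0 k) (- 3) 3 (-2 * dd CC ord0 k) 3 (9/10) +
   Kc CC 3 ord0 / (9/10) ^+ 3 < 0.
Proof.
cexp.
have h1 := @self_fq_le R 3 2 (9/10) ltac:(lra) ltac:(lra) ltac:(rewrite expr2; lra) ltac:(lra).
have h2 := @fq_le0 R 1 (- 3) 3 (-2 * 1) 3 (9/10) ltac:(lra).
have h3 := @fq_le0 R (-1) (- 3) 3 (-2 * -1) 3 (9/10) ltac:(lra).
have h4 := @fq_le0 R (-3) (- 3) 3 (-2 * -3) 3 (9/10) ltac:(lra).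
have kp := cKc_hi.
have e : Kc CC 3 ord0 / (9/10) ^+ 3 = 1000/729 * Kc CC 3 ord0 by field.
have e3 : (3 / ((2 : R) ^+ 3 * (1 - 9 / 10) ^+ 2)) = 75/2 by field.
rewrite e3 in h1; rewrite e; lra.
Qed.

Theorem cube_thr : threshold_property CC.
Proof.
have r0 : (0 : R) < 3 by lra.
have a : ((0:R) < 1/10) && (1/10 < (1:R)) by apply/andP; split; lra.
have b : ((0:R) < 9/10) && (9/10 < (1:R)) by apply/andP; split; lra.
have T := (@thr R 8 CC 3 ord0 r0 (@cP0 R) (@clt R) (@cS1 R) (@cS2 R) (@cS3 R) cHQ cHF cHH (1/10) (9/10) a b cHp cHn).
exact T.
Qed.

End CubA.

Theorem theorem14 (R : realType) :
  threshold_property (@tetra R) /\ threshold_property (@octa R) /\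
  threshold_property (@cube R).
Proof.
split; first exact: tetra_thr.
split; first exact: octa_thr.
exact: cube_thr.
Qed.
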